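(* Let $B \in \mathbb{R}^{r \times n}$ and $S\subseteq \mathbb{R}^n$, and let $S_B = \{ x^B - y^B \mid x,y \in \mathbb{R}^n_+,\ x - y \in S^* \}\subseteq\mathbb{R}^r$. Then $\sigma(S_B) = \sigma(B(\Sigma(S^* )))$.
   Context: $\mathbb{R}_+$ denotes the strictly positive reals. For $x\in\mathbb{R}^n_+$, $x^B\in\mathbb{R}^r_+$ has components $(x^B)_j=\prod_{i=1}^n x_i^{b_{ji}}$ (real exponents). $S^*=S\setminus\{0\}$. For $x\in\mathbb{R}^k$, $\sigma(x)$ is the componentwise sign vector in $\{-,0,+\}^k$; for $T\subseteq\mathbb{R}^k$, $\sigma(T)=\{\sigma(x)\mid x\in T\}$ and $\Sigma(T)=\sigma^{-1}(\sigma(T))$. $B(T)=\{Bx\mid x\in T\}$. *)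

(* Defs.v *)
From Stdlib Require Import Reals.
From mathcomp Require Import ssreflect ssrfun ssrbool eqtype ssrnat seq fintype bigop.

Set Implicit Arguments.
Unset Strict Implicit.

Local Open Scope R_scope.

Definition vec (n : nat) := 'I_n -> R.
Definition mat (r n : nat) := 'I_r -> 'I_n -> R.

Definition posvec (n : nat) (x : vec n) : Prop := forall i, 0 < x i.

Definition mono (r n : nat) (B : mat r n) (x : vec n) : vec r :=
  fun j => \big[Rmult/1]_(i < n) Rpower (x i) (B j i).

Definition matvec (r n : nat) (B : mat r n) (x : vec n) : vec r :=
  fun j => \big[Rplus/0]_(i < n) (B j i * x i).

Definition vsub (n : nat) (x y : vec n) : vec n := fun i => x i - y i.

Inductive sgn := SNeg | SZero | SPos.

Definition sign (a : R) : sgn :=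
  match total_order_T a 0 with
  | inleft (left _) => SNeg
  | inleft (right _) => SZero
  | inright _ => SPos
  end.

Definition sigma (k : nat) (x : vec k) : 'I_k -> sgn := fun i => sign (x i).

Definition sigmaSet (k : nat) (T : vec k -> Prop) (s : 'I_k -> sgn) : Prop :=
  exists x, T x /\ forall i, sigma x i = s i.

Definition SigmaSet (k : nat) (T : vec k -> Prop) (y : vec k) : Prop :=
  sigmaSet T (sigma y).

Definition Sstar (n : nat) (S : vec n -> Prop) (x : vec n) : Prop :=
  S x /\ exists i, x i <> 0.

Definition imageB (r n : nat) (B : mat r n) (T : vec n -> Prop) (z : vec r) : Prop :=
  exists x, T x /\ forall j, z j = matvec B x j.

Definition SB (r n : nat) (B : mat r n) (S : vec n -> Prop) (z : vec r) : Prop :=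
  exists x y, posvec x /\ posvec y /\ Sstar S (vsub x y) /\
    forall j, z j = mono B x j - mono B y j.

(* Main.v *)
Require Import Defs.
From Stdlib Require Import Reals.
From mathcomp Require Import ssreflect ssrfun ssrbool eqtype ssrnat seq fintype bigop.
From Stdlib Require Import Lra FunctionalExtensionality.

Local Open Scope R_scope.

Lemma sign_cases (a : R) :
  (sign a = SNeg /\ a < 0) \/ (sign a = SZero /\ a = 0) \/ (sign a = SPos /\ 0 < a).
Proof.
  rewrite /sign; destruct (total_order_T a 0) as [[H|H]|H]; auto.
Qed.

Lemma sign_neg a : a < 0 -> sign a = SNeg.
Proof. move=> H; case: (sign_cases a) => [[]|[[]|[]]] //; lra. Qed.
Lemma sign_zero a : a = 0 -> sign a = SZero.
Proof. move=> H; case: (sign_cases a) => [[]|[[]|[]]] //; lra. Qed.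
Lemma sign_pos a : 0 < a -> sign a = SPos.
Proof. move=> H; case: (sign_cases a) => [[]|[[]|[]]] //; lra. Qed.

Lemma sign_exp a b : sign (exp a - exp b) = sign (a - b).
Proof.
  case: (Rtotal_order a b) => [H|[H|H]].
  - have := exp_increasing _ _ H => H2.
    rewrite sign_neg; [|lra]. rewrite sign_neg //; lra.
  - subst; rewrite !sign_zero //; lra.
  - have := exp_increasing _ _ H => H2.
    rewrite sign_pos; [|lra]. rewrite sign_pos //; lra.
Qed.

Lemma sign_ln a b : 0 < a -> 0 < b -> sign (ln a - ln b) = sign (a - b).
Proof.
  move=> Ha Hb.
  case: (Rtotal_order a b) => [H|[H|H]].
  - have := ln_increasing _ _ Ha H => H2.
    rewrite sign_neg; [|lra]. rewrite sign_neg //; lra.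
  - subst; rewrite !sign_zero //; lra.
  - have := ln_increasing _ _ Hb H => H2.
    rewrite sign_pos; [|lra]. rewrite sign_pos //; lra.
Qed.

Lemma prod_exp (n : nat) (f : 'I_n -> R) :
  \big[Rmult/1]_(i < n) exp (f i) = exp (\big[Rplus/0]_(i < n) f i).
Proof.
  apply: (big_ind2 (fun a b => a = exp b)).
  - by rewrite exp_0.
  - by move=> x1 x2 y1 y2 -> ->; rewrite exp_plus.
  - by [].
Qed.

Lemma sum_sub (n : nat) (f g h : 'I_n -> R) :
  (forall i, f i - g i = h i) ->
  \big[Rplus/0]_(i < n) f i - \big[Rplus/0]_(i < n) g i = \big[Rplus/0]_(i < n) h i.
Proof.
  move=> H.
  apply: (big_ind3 (fun a b c => a - b = c)).
  - lra.
  - move=> x1 x2 x3 y1 y2 y3 H1 H2; lra.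
  - by move=> i _; apply: H.
Qed.

Lemma core (r n : nat) (B : mat r n) (x y : vec n) (v : vec n) :
  (forall i, ln (x i) - ln (y i) = v i) ->
  forall j, sign (mono B x j - mono B y j) = sign (matvec B v j).
Proof.
  move=> Hv j.
  rewrite /mono /Rpower !prod_exp sign_exp /matvec.
  congr sign; apply: sum_sub => i.
  rewrite -Hv; ring.
Qed.

Theorem mainTheorem6 (r n : nat) (B : mat r n) (S : vec n -> Prop) :
  forall s : 'I_r -> sgn,
    sigmaSet (SB B S) s <-> sigmaSet (imageB B (SigmaSet (Sstar S))) s.
Proof.
  move=> s; split.
  - move=> [z [[x [y [Hx [Hy [HS Hz]]]]] Hs]].
    pose v : vec n := fun i => ln (x i) - ln (y i).
    exists (matvec B v); split.
    + exists v; split; last by [].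
      exists (vsub x y); split => //.
      move=> i; rewrite /Defs.sigma /vsub /v /=; symmetry; exact: sign_ln.
    + move=> j; rewrite -Hs /Defs.sigma Hz (@core r n B x y v) //.
  - move=> [z [[v [[w [HS Hw]] Hz]] Hs]].
    have Hwv : forall i, sign (w i) = sign (v i) := Hw.
    pose y : vec n := fun i =>
      match Req_EM_T (w i) 0 with left _ => 1 | right _ => w i / (exp (v i) - 1) end.
    pose x : vec n := fun i => y i * exp (v i).
    have Hy : posvec y.
    { move=> i; rewrite /y; case: Req_EM_T => [_|Hne]; first lra.
      have := Hwv i.
      case: (sign_cases (w i)) => [[-> H1]|[[-> H1]|[-> H1]]] //;
      case: (sign_cases (v i)) => [[-> H2]|[[-> H2]|[-> H2]]] // _.
      - have := exp_increasing _ _ H2; rewrite exp_0 => H3.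
        apply: Rdiv_neg_neg; lra.
      - have := exp_increasing _ _ H2; rewrite exp_0 => H3.
        apply: Rdiv_lt_0_compat; lra. }
    have Hx : posvec x.
    { move=> i; rewrite /x; apply: Rmult_lt_0_compat; [apply: Hy|apply: exp_pos]. }
    have Hxy : vsub x y = w.
    { apply: functional_extensionality => i; rewrite /vsub /x /y.
      case: Req_EM_T => [E|Hne].
      - have := Hwv i; rewrite (sign_zero _ E).
        case: (sign_cases (v i)) => [[-> H2]|[[-> H2]|[-> H2]]] // _.
        rewrite H2 exp_0 E; ring.
      - have Hv0 : v i <> 0.
        { move=> E; have := Hwv i; rewrite (sign_zero _ E).
          case: (sign_cases (w i)) => [[-> H1]|[[-> H1]|[-> H1]]] //. }
        have He : exp (v i) - 1 <> 0.
        { move=> E; apply: Hv0; apply: exp_inv; rewrite exp_0; lra. }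
        field; exact: He. }
    have Hln : forall i, ln (x i) - ln (y i) = v i.
    { move=> i; rewrite /x ln_mult; [|apply: Hy|apply: exp_pos].
      rewrite ln_exp; ring. }
    exists (fun j => mono B x j - mono B y j); split.
    + exists x, y; do 3 (split => //). by rewrite Hxy.
    + move=> j; rewrite -Hs /Defs.sigma Hz; exact: core.
Qed.
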